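(* Let $k\ge 2$, let $d$ be a positive integer, let $1\le r<k$ and let $r<t\le k$. Let $\hat W=(W_1,\ldots,W_d)$ with each $W_i\in\{+,-\}^r$, and let $\hat p=(p_1,\ldots,p_d)$ be a sequence of pairwise disjoint $r$-tuples $p_j=(a_{j,1},\ldots,a_{j,r})$ with $a_{j,i}\in A_i$. For all sufficiently large $n$ (as a function of $k$ and $d$), for $T\sim\mathcal{R}(n,k)$, $$\Pr\left[|I_{\hat W}(\hat p,t)|\ge n(1-1/2^r)^d+n^{2/3}\right]\le \frac{1}{n^{kd+1}}.$$
   Context: $\mathcal{R}(n,k)$ is the probability space of $k$-partite tournaments with vertex classes $A_1,\ldots,A_k$ of size $n$ each, every edge between distinct classes oriented independently and uniformly at random. For an $r$-tuple $p=(a_1,\ldots,a_r)$ with $a_i\in A_i$, a vertex $v\in A_t$ ($t>r$) and $W\in\{+,-\}^r$, $v$ is $W$-consistent with $p$ if for each $i$, $(v,a_i)\in E(T)$ iff $W(i)=+$; otherwise $v$ is $W$-inconsistent with $p$. For $\hat p,\hat W$ as in the statement, $v\in A_t$ is $\hat W$-inconsistent with $\hat p$ if $v$ is $W_i$-inconsistent with $p_i$ for every $i=1,\ldots,d$, and $I_{\hat W}(\hat p,t)$ is the set of vertices of $A_t$ that are $\hat W$-inconsistent with $\hat p$. *)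

(* Defs.v *)
From HB Require Import structures.
From mathcomp Require Import all_boot all_order all_algebra.
From mathcomp Require Import reals exp.
Set Implicit Arguments. Unset Strict Implicit. Unset Printing Implicit Defensive.
Import Order.TTheory GRing.Theory Num.Theory.

(* Vertices of the k-partite tournament: class i : 'I_k (0-indexed, class i
   corresponds to A_{i+1} in the paper), position within the class : 'I_n. *)
Definition vtx (k n : nat) := ('I_k * 'I_n)%type.

(* Unordered pairs of vertices in distinct classes, represented by the
   ordered pair (u,v) with class(u) < class(v). *)
Definition edge_dom (k n : nat) :=
  {e : vtx k n * vtx k n | (nat_of_ord e.1.1 < nat_of_ord e.2.1)%N}.

(* A k-partite tournament: for each such pair, T e = true means u -> v,
   false means v -> u. The uniform distribution on this finite type is
   exactly R(n,k). *)
Definition tourn (k n : nat) := {ffun edge_dom k n -> bool}.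

Definition arc (k n : nat) (T : tourn k n) (u v : vtx k n) : bool :=
  match @insub _ (fun e : vtx k n * vtx k n => (nat_of_ord e.1.1 < nat_of_ord e.2.1)%N)
               (edge_dom k n) (u, v) with
  | Some e => T e
  | None =>
    match @insub _ (fun e : vtx k n * vtx k n => (nat_of_ord e.1.1 < nat_of_ord e.2.1)%N)
                 (edge_dom k n) (v, u) with
    | Some e => ~~ T e
    | None => false
    end
  end.

(* v is W-consistent with the r-tuple a (W i = true encodes '+'):
   for each i, (v, a_i) in E(T) iff W(i) = +. *)
Definition consistent (k n r : nat) (T : tourn k n) (W : 'I_r -> bool)
  (a : 'I_r -> vtx k n) (v : vtx k n) : bool :=
  [forall i : 'I_r, arc T v (a i) == W i].

Definition hat_inconsistent (k n r d : nat) (T : tourn k n)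
  (W : 'I_d -> 'I_r -> bool) (p : 'I_d -> 'I_r -> vtx k n) (v : vtx k n) : bool :=
  [forall j : 'I_d, ~~ consistent T (W j) (p j) v].

Definition I_set (k n r d : nat) (T : tourn k n)
  (W : 'I_d -> 'I_r -> bool) (p : 'I_d -> 'I_r -> vtx k n) (t : 'I_k)
  : {set vtx k n} :=
  [set v : vtx k n | (v.1 == t) && hat_inconsistent T W p v].

Definition Pr (R : realType) (k n : nat) (E : pred (tourn k n)) : R :=
  (#|[set T : tourn k n | E T]|%:R / #|{: tourn k n}|%:R)%R.

(* Main.v *)
Require Import Defs.
From HB Require Import structures.
From mathcomp Require Import all_boot all_order all_algebra.
From mathcomp Require Import reals exp.
From mathcomp Require Import sequences.
From mathcomp Require Import ring lra.
Import Order.TTheory GRing.Theory Num.Theory.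
Local Open Scope ring_scope.
Lemma fiber_card (A Y : finType) (Phi : A -> Y) (y0 : Y)
  (hs : forall y, exists s : A -> A, injective s /\ forall f, (Phi (s f) == y0) = (Phi f == y)) :
  forall y, #|[set f | Phi f == y]| = #|[set f | Phi f == y0]|.
Proof.
move=> y; have [s [inj h]] := hs y.
rewrite -(@card_preimset _ s [set f | Phi f == y0] inj); apply: eq_card => f.
by rewrite !inE h.
Qed.

Lemma push_sum (R : realType) (A Y : finType) (Phi : A -> Y) (y0 : Y)
  (hs : forall y, exists s : A -> A, injective s /\ forall f, (Phi (s f) == y0) = (Phi f == y))
  (F : Y -> R) :
  #|Y|%:R * \sum_(f : A) F (Phi f) = #|A|%:R * \sum_(y : Y) F y.
Proof.
set c := #|[set f | Phi f == y0]|.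
have e1 : forall G : Y -> R, \sum_(f : A) G (Phi f) = \sum_(y : Y) G y *+ c.
  move=> G; rewrite (partition_big Phi predT) //=; apply: eq_bigr => y _.
  rewrite (eq_bigr (fun _ => G y)); last by move=> f /eqP ->.
  rewrite (eq_bigl (fun f => f \in [set f | Phi f == y])); last by move=> f; rewrite inE.
  by rewrite sumr_const (@fiber_card _ _ _ _ hs).
have e2 : (#|A|%:R : R) = #|Y|%:R *+ c.
  have := e1 (fun _ => 1); rewrite !sumr_const => ->.
  by rewrite -!mulrnA mulnC.
by rewrite e1 e2 sumrMnl mulrnAr (mulrnAl (#|Y|%:R)).
Qed.
Lemma expR_le1D (R : realType) (dl : R) : 0 <= dl -> expR (dl / (1 + dl)) <= 1 + dl.
Proof.
move=> hd.
have h1 : 0 < 1 + dl by lra.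
have := expR_ge1Dx (- (dl / (1 + dl))).
have -> : 1 + - (dl / (1 + dl)) = (1 + dl)^-1 by field; lra.
rewrite expRN => h.
by rewrite -lef_pV2 ?posrE ?expR_gt0.
Qed.

Lemma chernoff (R : realType) (n : nat) (Y : finType) (bad : pred Y) (a dl : R) :
  0 <= dl ->
  \sum_(h : {ffun 'I_n -> Y}) (if a <= #|[set x | bad (h x)]|%:R then 1 else 0)
  <= expR (- a * (dl / (1 + dl))) * (#|Y|%:R + dl * #|[set y | bad y]|%:R) ^+ n.
Proof.
move=> hd.
set th := dl / (1 + dl).
have hth : 0 <= th by rewrite /th divr_ge0 //; lra.
apply: (@le_trans _ _ (\sum_(h : {ffun 'I_n -> Y})
   expR (- a * th) * \prod_(x < n) (if bad (h x) then 1 + dl else 1))).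
  apply: ler_sum => h _.
  rewrite -big_mkcond /= prodr_const.
  set c := #|_|; set c' := #|_|.
  have -> : c' = c by rewrite /c /c' cardsE.
  case: ifP => hc; last by rewrite mulr_ge0 ?expR_ge0 // exprn_ge0 //; lra.
  apply: (@le_trans _ _ (expR (- a * th) * expR (c%:R * th))).
    rewrite -expRD; apply: le_trans (expR_ge1Dx _); nra.
  rewrite ler_wpM2l ?expR_ge0 // expRM_natl lerXn2r ?nnegrE ?expR_ge0 ?expR_le1D //; lra.
rewrite -mulr_sumr ler_wpM2l ?expR_ge0 //.
rewrite -(bigA_distr_bigA (fun (x : 'I_n) (y : Y) => if bad y then 1 + dl else 1)) /=.
have eS : \sum_(y : Y) (if bad y then 1 + dl else 1) = #|Y|%:R + dl * #|[set y | bad y]|%:R.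
  rewrite (eq_bigr (fun y => 1 + (if bad y then dl else 0))); last by move=> y _; case: (bad y); rewrite ?addr0.
  rewrite big_split /= sumr_const -big_mkcond /= sumr_const cardsE.
  by rewrite mulr_natr.
by rewrite prodr_const card_ord eS.
Qed.
Lemma expR_big (R : realType) (K : nat) (w : R) :
  (6 ^ (3 * K).+1 * ((3 * K).+1)`!)%:R <= w ->
  w ^+ (3 * K) <= expR (w / 6).
Proof.
set M := (3 * K).+1 => hw.
have hc1 : (1 : R) <= (6 ^ M * M`!)%:R.
  by rewrite ler1n muln_gt0 expn_gt0 fact_gt0.
have w0 : 0 <= w by lra.
have := expR_ge1Dxn (3 * K) (divr_ge0 w0 (ler0n _ 6)).
apply: le_trans.
have hf : (0 : R) < M`!%:R by rewrite ltr0n fact_gt0.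
rewrite expr_div_n /M exprSr.
apply: (@le_trans _ _ ((w ^+ (3 * K) * w / 6 ^+ (3 * K).+1) / (3 * K).+1`!%:R)); last first.
  have : 0 <= (w ^+ (3 * K) * w / 6 ^+ (3 * K).+1) / (3 * K).+1`!%:R.
    by rewrite !divr_ge0 ?mulr_ge0 ?exprn_ge0.
  lra.
rewrite -!mulrA ler_pMr ?exprn_gt0 //; last first.
  lra.
rewrite -invfM ler_pdivlMr ?mulr_gt0 ?exprn_gt0 // mul1r.
move: hw; rewrite natrM natrX /M; exact.
Qed.

Lemma tail_bound (R : realType) (K : nat) : exists N : nat, (0 < N)%N /\
  forall n : nat, (N <= n)%N -> forall q : R, 0 <= q <= 1 ->
  expR (- (n%:R * q + n%:R `^ (2/3)) *
     ((n%:R `^ (2/3) / (2 * n%:R)) / (1 + n%:R `^ (2/3) / (2 * n%:R))))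
   * (1 + (n%:R `^ (2/3) / (2 * n%:R)) * q) ^+ n <= 1 / n%:R ^+ K.
Proof.
set c := (6 ^ (3 * K).+1 * ((3 * K).+1)`!)%N.
have c1 : (0 < c)%N by rewrite muln_gt0 expn_gt0 fact_gt0.
exists (c ^ 3)%N; split; first by rewrite expn_gt0 c1.
move=> n hn q /andP[q0 q1].
have n1 : (0 < n)%N by apply: leq_trans hn; rewrite expn_gt0 c1.
have hn0 : (0 : R) < n%:R by rewrite ltr0n.
set w := (n%:R : R) `^ (1/3).
have w0 : 0 <= w by exact: powR_ge0.
have w3 : w ^+ 3 = n%:R.
  rewrite /w -powR_mulrn ?powR_ge0 // -powRrM.
  have -> : (1 / 3 * 3%:R : R) = 1 by field.
  by rewrite powRr1 // ltW.
have s2 : n%:R `^ (2/3) = w ^+ 2.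
  rewrite /w -powR_mulrn ?powR_ge0 // -powRrM.
  by have -> : (1 / 3 * 2%:R : R) = 2 / 3 by field.
have wc : c%:R <= w.
  rewrite -(@ler_pXn2r _ 3) // ?nnegrE // w3 -natrX ler_nat //.
have w1 : 1 <= w.
  by apply: le_trans wc; rewrite ler1n.
rewrite s2 -w3.
set dl := w ^+ 2 / (2 * w ^+ 3).
have hdl : dl = (2 * w)^-1 by rewrite /dl; field; lra.
have dl0 : 0 <= dl by rewrite hdl invr_ge0; lra.
apply: (@le_trans _ _ (expR (- (w ^+ 3 * q + w ^+ 2) * (dl / (1 + dl))) * expR (n%:R * (dl * q)))).
  rewrite ler_wpM2l ?expR_ge0 // expRM_natl lerXn2r ?nnegrE ?expR_ge0 ?expR_ge1Dx //.
  by apply: addr_ge0 => //; apply: mulr_ge0.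
rewrite -w3 -expRD.
apply: (@le_trans _ _ (expR (- (w / 6)))).
  rewrite ler_expR hdl.
  have -> : - (w ^+ 3 * q + w ^+ 2) * ((2 * w)^-1 / (1 + (2 * w)^-1)) + w ^+ 3 * ((2 * w)^-1 * q)
     = - (w / 6) + (w ^+ 2 * (3 * q - 4) + w) / (6 * (2 * w + 1)).
    field; lra.
  rewrite gerDl ler_pdivrMr; last lra.
  rewrite mul0r; nra.
rewrite expRN.
have := @expR_big R K w wc.
move=> h; rewrite -exprM div1r lef_pV2 ?posrE ?expR_gt0 ?exprn_gt0 //; lra.
Qed.

Definition eE (k n r d : nat) (t : 'I_k) (p : 'I_d -> 'I_r -> vtx k n)
  (hpf : forall j i, (nat_of_ord (p j i).1 < nat_of_ord t)%N)
  (x : 'I_n) (j : 'I_d) (i : 'I_r) : edge_dom k n :=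
  exist _ (p j i, (t, x)) (hpf j i).

Lemma arc_eE (k n r d : nat) (t : 'I_k) (p : 'I_d -> 'I_r -> vtx k n)
  (hpf : forall j i, (nat_of_ord (p j i).1 < nat_of_ord t)%N)
  (T : tourn k n) (x : 'I_n) (j : 'I_d) (i : 'I_r) :
  Defs.arc T (t, x) (p j i) = ~~ T (@eE k n r d t p hpf x j i).
Proof.
rewrite /Defs.arc insubF; last by apply/negbTE; rewrite -leqNgt ltnW // hpf.
by rewrite (@insubT _ (fun e : vtx k n * vtx k n => (nat_of_ord e.1.1 < nat_of_ord e.2.1)%N) (edge_dom k n) (p j i, (t, x)) (hpf j i)).
Qed.

Lemma eE_inj (k n r d : nat) (t : 'I_k) (p : 'I_d -> 'I_r -> vtx k n)
  (hpf : forall j i, (nat_of_ord (p j i).1 < nat_of_ord t)%N)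
  (hp : forall (j : 'I_d) (i : 'I_r), nat_of_ord (p j i).1 = nat_of_ord i)
  (hdisj : forall (j j' : 'I_d) (i i' : 'I_r), j != j' -> p j i != p j' i')
  (x : 'I_n) (j : 'I_d) (i : 'I_r) (x' : 'I_n) (j' : 'I_d) (i' : 'I_r) :
  @eE k n r d t p hpf x j i = @eE k n r d t p hpf x' j' i' -> (x, j, i) = (x', j', i').
Proof.
move/(congr1 val) => /= [hp' hx].
case: (eqVneq j j') => [ej | nj]; last by have := hdisj j j' i i' nj; rewrite hp' eqxx.
subst j' x'; congr (_, _, _); apply/val_inj => /=.
by rewrite -(hp j i) hp' hp.
Qed.

Theorem lemma4p9 (R : realType) (k d : nat) :
  (2 <= k)%N -> (0 < d)%N ->
  exists N : nat, forall n : nat, (N <= n)%N ->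
  forall (r : nat) (t : 'I_k), (1 <= r)%N -> (r < k)%N -> (r <= t)%N ->
  forall (W : 'I_d -> 'I_r -> bool) (p : 'I_d -> 'I_r -> vtx k n),
    (forall (j : 'I_d) (i : 'I_r), nat_of_ord (p j i).1 = nat_of_ord i) ->
    (forall (j j' : 'I_d) (i i' : 'I_r), j != j' -> p j i != p j' i') ->
    Pr R (fun T : tourn k n =>
            n%:R * (1 - (2 ^+ r)^-1) ^+ d + (n%:R `^ (2 / 3))
              <= (#|I_set T W p t|%:R : R))
      <= 1 / n%:R ^+ (k * d + 1).
Proof.
move=> hk hd.
have [N [N0 HN]] := tail_bound R (k * d + 1).
exists N => n hn r t r1 rk rt W p hp hdisj.
have hpf : forall j i, (nat_of_ord (p j i).1 < nat_of_ord t)%N.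
  by move=> j i; rewrite hp; exact: leq_trans (ltn_ord i) rt.
pose e := @eE k n r d t p hpf.
have einj := @eE_inj k n r d t p hpf hp hdisj.
pose Yd := {ffun 'I_d -> {ffun 'I_r -> bool}}.
pose Phi := fun T : tourn k n =>
  [ffun x : 'I_n => [ffun j : 'I_d => [ffun i : 'I_r => T (e x j i)]]] : {ffun 'I_n -> Yd}.
pose wv := fun j : 'I_d => [ffun i : 'I_r => ~~ W j i].
pose bad := fun y : Yd => [forall j, y j != wv j].
have hcons : forall T x, hat_inconsistent T W p (t, x) = bad (Phi T x).
  move=> T x; apply: eq_forallb => j; congr negb; rewrite /consistent.
  apply/forallP/eqP => [h | h].
    apply/ffunP => i; rewrite !ffunE; have := h i; rewrite arc_eE => /eqP <-.
    by rewrite negbK.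
  move=> i; rewrite arc_eE; move/ffunP: h => /(_ i); rewrite !ffunE => ->.
  by rewrite negbK.
have hI : forall T, #|I_set T W p t| = #|[set x | bad (Phi T x)]|.
  move=> T.
  have inj : injective (fun x : 'I_n => (t, x)) by move=> x y [].
  rewrite -(card_imset _ inj); apply: eq_card => -[c x]; rewrite /I_set !inE /=.
  case: (eqVneq c t) => [-> | ne] /=.
    by rewrite mem_imset // inE hcons.
  by apply/esym/imsetP => -[y _ [ec _]]; rewrite ec eqxx in ne.
pose y0 : {ffun 'I_n -> Yd} := [ffun _ => [ffun _ => [ffun _ => false]]].
have hs : forall y, exists s : tourn k n -> tourn k n,
    injective s /\ forall T, (Phi (s T) == y0) = (Phi T == y).
  move=> y.
  pose L := fun ed : edge_dom k n =>
    if [pick z : 'I_n * 'I_d * 'I_r | e z.1.1 z.1.2 z.2 == ed] is Some z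
    then y z.1.1 z.1.2 z.2 else false.
  have hL : forall x j i, L (e x j i) = y x j i.
    move=> x j i; rewrite /L; case: pickP => [z /eqP hz | hnp].
      by have := einj _ _ _ _ _ _ hz; case: z hz => -[? ?] ? _ [-> -> ->].
    by have := hnp (x, j, i); rewrite /= eqxx.
  exists (fun T => [ffun ed => T ed (+) L ed]); split.
    move=> T1 T2 /ffunP h; apply/ffunP => ed; have := h ed; rewrite !ffunE.
    by case: (T1 ed); case: (T2 ed); case: (L ed).
  move=> T; apply/eqP/eqP => h.
    apply/ffunP => x; apply/ffunP => j; apply/ffunP => i.
    move/ffunP: h => /(_ x) /ffunP /(_ j) /ffunP /(_ i); rewrite !ffunE hL.
    by case: (T (e x j i)); case: (y x j i).
  apply/ffunP => x; apply/ffunP => j; apply/ffunP => i; rewrite !ffunE hL -h !ffunE.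
  by case: (T (e x j i)).
have hB : (#|[set y : Yd | bad y]|%:R : R) = (2 ^+ r - 1) ^+ d.
  rewrite -sum1_card natr_sum big_mkcond /=.
  rewrite (eq_bigr (fun y : Yd => \prod_(j < d) (if y j != wv j then (1 : R) else 0))); last first.
    move=> y _; rewrite inE /bad; case: (boolP [forall j, y j != wv j]) => [/forallP h | ].
      by rewrite big1 // => j _; rewrite h.
    move/forallPn => [j /negPn hj]; rewrite (bigD1 j) //= hj mul0r //.
  rewrite -(bigA_distr_bigA (fun (j : 'I_d) (u : {ffun 'I_r -> bool}) => if u != wv j then (1 : R) else 0)) /=.
  rewrite (eq_bigr (fun _ => 2 ^+ r - 1)); last first.
    move=> j _; rewrite -big_mkcond /= sumr_const.
    rewrite (eq_card (B := predC1 (wv j))) // cardC1 card_ffun card_bool card_ord.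
    by rewrite -subn1 natrB ?expn_gt0 // natrX.
  by rewrite prodr_const card_ord.
have hA : (#|Yd|%:R : R) = (2 ^+ r) ^+ d.
  by rewrite card_ffun card_ffun card_bool !card_ord natrX natrX.
set q := (1 - (2 ^+ r)^-1) ^+ d.
set s := n%:R `^ (2 / 3).
set a := n%:R * q + s.
pose F := fun h : {ffun 'I_n -> Yd} =>
  if a <= #|[set x | bad (h x)]|%:R then (1 : R) else 0.
have hpush := @push_sum R _ _ Phi y0 hs F.
have hev : \sum_(T : tourn k n) F (Phi T) =
    #|[set T : tourn k n | a <= #|I_set T W p t|%:R]|%:R.
  rewrite /F (eq_bigr (fun T => if a <= #|I_set T W p t|%:R then (1 : R) else 0)); last first.
    by move=> T _; rewrite hI.
  by rewrite -big_mkcond /= sumr_const cardsE.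
have tpos : (0 : R) < #|{: tourn k n}|%:R.
  by rewrite ltr0n card_ffun expn_gt0 card_bool.
have Ypos : (0 : R) < #|{: {ffun 'I_n -> Yd}}|%:R.
  by rewrite ltr0n card_ffun expn_gt0 card_ffun expn_gt0 card_ffun expn_gt0 card_bool.
rewrite /Pr -/q -/s -/a.
have -> : #|[set T : tourn k n | a <= #|I_set T W p t|%:R]|%:R / #|{: tourn k n}|%:R
     = (\sum_h F h) / #|{: {ffun 'I_n -> Yd}}|%:R.
  apply/eqP; rewrite eqr_div ?lt0r_neq0 // -hev mulrC hpush mulrC //.
have q0 : 0 <= 1 - (2 ^+ r : R)^-1.
  rewrite subr_ge0 invf_le1 ?exprn_gt0 // exprn_ege1 //; lra.
have q1 : 1 - (2 ^+ r : R)^-1 <= 1.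
  rewrite lerBlDr lerDl invr_ge0 exprn_ge0 //.
have hq : 0 <= q <= 1 by rewrite /q exprn_ge0 // exprn_ile1.
apply: le_trans (HN n hn q hq).
rewrite ler_pdivrMr //.
set dl := s / (2 * n%:R).
have n0 : (0 : R) < n%:R by rewrite ltr0n; apply: leq_trans hn.
have dl0 : 0 <= dl by rewrite /dl divr_ge0 ?powR_ge0 //; lra.
have hc := @chernoff R n Yd bad a dl dl0.
apply: le_trans hc _.
have hBq : (#|[set y : Yd | bad y]|%:R : R) = q * #|Yd|%:R.
  rewrite hB hA /q -exprMn; congr (_ ^+ _); field.
  by rewrite expf_neq0 //; lra.
have hY : (#|{: {ffun 'I_n -> Yd}}|%:R : R) = (#|Yd|%:R) ^+ n.
  by rewrite card_ffun card_ord natrX.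
rewrite hBq hY; set A := (#|Yd|%:R : R).
have -> : A + dl * (q * A) = (1 + dl * q) * A by ring.
by rewrite exprMn mulrA.
Qed.
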